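(* Let $F$ be a global function field with full constant field $\mathbb{F}_q$ and rational places $P_1,\dots,P_n$; fix $m\ge1$. Let $r\ge t\ge0$ and $j_1,\dots,j_m\ge0$ be integers. The set $\mathcal{U}(r,t;j_1,\dots,j_m)$ is nonempty if and only if (i) $mn-(j_1+2j_2+\cdots+mj_m)\le t\le(m+1)n-(2j_1+3j_2+\cdots+(m+1)j_m)$, and (ii) if $mn=t+j_1+2j_2+\cdots+mj_m$ and $r>t$, then there exists a positive divisor of degree $r-t$ whose support is disjoint from $\{P_1,\dots,P_n\}$.
   Context: For a positive divisor $D$: $\overline D=\sum_{i=1}^n\min(m+1,v_{P_i}(D))P_i$, $j_\ell(D)=|\{i:v_{P_i}(D)=m-\ell\}|$. $\mathcal{U}(r,t;j_1,\dots,j_m)$ is the set of positive divisors $D$ of $F$ with $\deg D=r$, $\deg\overline D=t$ and $j_\ell(D)=j_\ell$ for $1\le\ell\le m$. *)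

(* Defs.v *)
From HB Require Import structures.
From mathcomp Require Import all_boot all_order all_algebra.
From mathcomp Require Import finmap.
Set Implicit Arguments.
Unset Strict Implicit.
Unset Printing Implicit Defensive.
Import Order.TTheory GRing.Theory Num.Theory.
Local Open Scope ring_scope.

(* Abstract model of the divisor group of a function field F:
   [place] is the set of places of F, [pdeg : place -> nat] their degrees. *)
Definition divisor (place : choiceType) := {fsfun place -> int with 0}.

Section Divisors.
Variables (place : choiceType) (pdeg : place -> nat).

Definition vP (D : divisor place) (p : place) : int := D p.

Definition ddeg (D : divisor place) : int :=
  \sum_(p <- finsupp D) (pdeg p)%:Z * vP D p.

Definition positive_div (D : divisor place) : Prop := forall p, 0 <= vP D p.

Variables (n : nat) (P : 'I_n -> place) (m : nat).

Definition Dbar (D : divisor place) : divisor place :=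
  [fsfun p in [fset P i | i : 'I_n]%fset => Num.min (m.+1)%:Z (vP D p) | 0].

Definition jl (D : divisor place) (l : nat) : nat :=
  #|[set i : 'I_n | vP D (P i) == m%:Z - l%:Z]|.

(* U(r,t; j_1,...,j_m) (only j 1, ..., j m are used) *)
Definition Uset (r t : int) (j : nat -> nat) (D : divisor place) : Prop :=
  [/\ positive_div D, ddeg D = r, ddeg (Dbar D) = t &
      forall l : nat, (1 <= l <= m)%N -> jl D l = j l].

End Divisors.

(* Main.v *)
Require Import Defs.
From HB Require Import structures.
From mathcomp Require Import all_boot all_order all_algebra.
From mathcomp Require Import finmap.
From mathcomp Require Import zify.
Import Order.TTheory GRing.Theory Num.Theory.
Set Implicit Arguments.
Unset Strict Implicit.
Unset Printing Implicit Defensive.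
Local Open Scope ring_scope.

Lemma key (m w : nat) (g : nat -> nat) :
  (\sum_(1 <= l < m.+1) g l * (w == m - l))%N = if (w < m)%N then g (m - w)%N else 0%N.
Proof.
case: ltnP => hw.
- rewrite (bigD1_seq (m - w)%N) /=; last by rewrite /index_iota iota_uniq.
    rewrite subKn ?(ltnW hw) // eqxx muln1 big1_seq ?addn0 // => l /andP [hl].
    rewrite mem_index_iota => hl'. case: eqP => [E|_]; [exfalso; lia | by rewrite muln0].
  rewrite mem_index_iota; lia.
- rewrite big1_seq // => l /andP [_]; rewrite mem_index_iota => hl.
  case: eqP => [E|_]; [exfalso; lia | by rewrite muln0].
Qed.

Lemma sum_j (n m : nat) (w : 'I_n -> nat) (g : nat -> nat) :
  (\sum_(1 <= l < m.+1) g l * #|[set i : 'I_n | w i == (m - l)%N]|)%N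
  = (\sum_i (if (w i < m)%N then g (m - w i)%N else 0%N))%N.
Proof.
under eq_bigr => l _ do rewrite -sum1_card big_mkcond /= big_distrr /=.
rewrite exchange_big; apply: eq_bigr => i _; rewrite -(key m (w i) g).
apply: eq_bigr => l _; rewrite inE; by case: eqP.
Qed.

Lemma ddeg_seq (place : choiceType) (pdeg : place -> nat) (D : divisor place) (s : seq place) :
  uniq s -> {subset finsupp D <= s} -> ddeg pdeg D = \sum_(p <- s) (pdeg p)%:Z * D p.
Proof.
move=> us sub; rewrite /ddeg /vP [RHS](bigID (mem (finsupp D))) /=.
rewrite [X in _ = _ + X]big1 ?addr0; last first.
  by move=> p hp; rewrite fsfun_dflt ?mulr0.
rewrite -[RHS]big_filter; apply: perm_big; apply: uniq_perm.
- exact: fset_uniq.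
- by rewrite filter_uniq.
- by move=> p; rewrite mem_filter; case h: (p \in finsupp D) => //=; rewrite (sub _ h).
Qed.

Definition offP (place : choiceType) n (P : 'I_n -> place) (D : divisor place) : divisor place :=
  [fsfun p in finsupp D => if p \in codom P then 0 else D p | 0].

Lemma offPE (place : choiceType) n (P : 'I_n -> place) (D : divisor place) p :
  offP P D p = if p \in codom P then 0 else D p.
Proof.
rewrite /offP fsfun_fun; case: ifP => // h; rewrite fsfun_dflt ?h //; by case: ifP.
Qed.

Lemma ddeg_split (place : choiceType) (pdeg : place -> nat) n (P : 'I_n -> place)
  (P_inj : injective P) (P_rat : forall i, pdeg (P i) = 1%N) (D : divisor place) :
  ddeg pdeg D = ddeg pdeg (offP P D) + \sum_i D (P i).
Proof.
set sO := [seq p <- finsupp D | p \notin codom P].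
have usO : uniq sO by rewrite filter_uniq // fset_uniq.
rewrite (@ddeg_seq _ _ D (sO ++ map P (index_enum 'I_n))); last 2 first.
- rewrite cat_uniq usO (map_inj_uniq P_inj) index_enum_uniq andbT /=.
  apply/hasPn => p /mapP [i _ ->]; rewrite mem_filter codom_f //.
- move=> p hp; rewrite mem_cat mem_filter hp andbT.
  case: (boolP (p \in codom P)) => //= /codomP [i ->].
  by apply: map_f; rewrite mem_index_enum.
rewrite (@ddeg_seq _ _ (offP P D) sO) //; last first.
  move=> p; rewrite mem_finsupp offPE mem_filter; case: (p \in codom P) => /=.
  - by [].
  - by move=> h; rewrite mem_finsupp h.
rewrite big_cat big_map /=; congr (_ + _).
- apply: eq_big_seq => p; rewrite mem_filter offPE => /andP [/negPf -> _] //.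
- by apply: eq_bigr => i _; rewrite P_rat mul1r.
Qed.

Lemma Dbar_deg (place : choiceType) (pdeg : place -> nat) n (P : 'I_n -> place)
  (P_inj : injective P) (P_rat : forall i, pdeg (P i) = 1%N) m (D : divisor place) :
  ddeg pdeg (Dbar P m D) = \sum_i Num.min (m.+1)%:Z (D (P i)).
Proof.
rewrite (@ddeg_seq _ _ _ (map P (index_enum 'I_n))); last 2 first.
- by rewrite (map_inj_uniq P_inj) index_enum_uniq.
- move=> p; rewrite mem_finsupp /Dbar fsfun_fun; case: ifP; last by rewrite eqxx.
  move=> /imfsetP [i _ ->] _; apply: map_f; by rewrite mem_index_enum.
rewrite big_map; apply: eq_bigr => i _; rewrite P_rat mul1r /Dbar fsfun_fun.
have -> : P i \in [fset P i0 | i0 : 'I_n]%fset by apply/imfsetP; exists i.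
by [].
Qed.

Lemma sum_nseq (k y : nat) (F : nat -> nat) : (\sum_(x <- nseq k y) F x)%N = (k * F y)%N.
Proof. elim: k => [|k IH]; first by rewrite big_nil. by rewrite /= big_cons IH mulSn. Qed.

Lemma card_sum n (p : pred 'I_n) : #|[set i | p i]| = (\sum_i p i)%N.
Proof.
rewrite -sum1_card big_mkcond /=; apply: eq_bigr => i _; rewrite inE; by case: (p i).
Qed.

Lemma sum_nth n (s : seq nat) (F : nat -> nat) : size s = n ->
  (\sum_(i < n) F (nth 0%N s i))%N = (\sum_(x <- s) F x)%N.
Proof. move=> hs; by rewrite (big_nth 0%N) hs big_mkord. Qed.

Lemma exist_w (n m : nat) (j : nat -> nat) (t e : nat) : (1 <= m)%N ->
  (m * n <= t + \sum_(1 <= l < m.+1) l * j l)%N ->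
  (t + \sum_(1 <= l < m.+1) l.+1 * j l <= m.+1 * n)%N ->
  exists w : 'I_n -> nat,
    [/\ forall l, (1 <= l <= m)%N -> #|[set i | w i == (m - l)%N]| = j l,
        (\sum_i minn m.+1 (w i))%N = t &
        (\sum_i w i)%N = (t + (if (m * n < t + \sum_(1 <= l < m.+1) l * j l)%N then e else 0))%N].
Proof.
move=> m1.
set S1 := (\sum_(1 <= l < m.+1) l * j l)%N.
set S2 := (\sum_(1 <= l < m.+1) l.+1 * j l)%N.
set SJ := (\sum_(1 <= l < m.+1) j l)%N.
set X := (\sum_(1 <= l < m.+1) j l * (m - l))%N.
have hS2 : S2 = (S1 + SJ)%N.
  by rewrite /S2 /S1 /SJ -big_split; apply: eq_bigr => k _; rewrite mulSn addnC.
have hX : (X + S1 = m * SJ)%N.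
  rewrite /X /S1 /SJ -big_split big_distrr /=; apply: eq_big_nat => l /andP [_ hl].
  rewrite mulnC -mulnDl subnK //.
move=> h1 h2.
set a := (m.+1 * n - S2 - t)%N.
set s0 := (flatten [seq nseq (j l) (m - l)%N | l <- index_iota 1 m.+1] ++ nseq a m)%N.
pose bp b := if b is b'.+1 then (m.+1 + e)%N :: nseq b' m.+1 else [::].
set b := (t + S1 - m * n)%N.
set s := s0 ++ bp b.
have sum_s0 : forall (bb : nat) (F : nat -> nat), (\sum_(x <- s0 ++ bp bb) F x =
   \sum_(1 <= l < m.+1) j l * F (m - l)%N + a * F m +
   (if bb is b'.+1 then F (m.+1 + e)%N + b' * F m.+1 else 0))%N.
  move=> bb F; rewrite /s0 !big_cat big_flatten /= big_map sum_nseq.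
  congr (_ + _ + _)%N; first by apply: eq_bigr => l _; rewrite sum_nseq.
  by case: bb => [|b'] /=; rewrite ?big_nil ?big_cons ?sum_nseq.
have sum_s : forall F : nat -> nat, (\sum_(x <- s) F x =
   \sum_(1 <= l < m.+1) j l * F (m - l)%N + a * F m +
   (if b is b'.+1 then F (m.+1 + e)%N + b' * F m.+1 else 0))%N.
  by move=> F; apply: sum_s0.
have hsize : size s = n.
  rewrite -sum1_size sum_s.
  have -> : (\sum_(1 <= l < m.+1) j l * 1 = SJ)%N by apply: eq_bigr => l _; rewrite muln1.
  rewrite /a /b hS2 in h2 *.
  case hb: (t + S1 - m * n)%N => [|b'] /=; nia.
exists (fun i => nth 0%N s i); split.
- move=> l0 /andP [hl0 hl0'].
  rewrite card_sum (sum_nth (fun x => x == (m - l0)%N) hsize) sum_s.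
  have -> : (\sum_(1 <= l < m.+1) j l * (m - l == m - l0)%N = j l0)%N.
    have hk := key m (m - l0) j.
    have hlt : (m - l0 < m)%N by lia.
    rewrite hlt subKn // in hk; rewrite -hk; apply: eq_bigr => l _; by rewrite eq_sym.
  have -> : (m == m - l0)%N = false by apply/eqP; lia.
  case hb: b => [|b'] /=; first by rewrite muln0 !addn0.
  have -> : (m.+1 + e == m - l0)%N = false by apply/eqP; lia.
  have -> : (m.+1 == m - l0)%N = false by apply/eqP; lia.
  by rewrite !muln0 !addn0.
- rewrite (sum_nth (fun x => minn m.+1 x) hsize) sum_s.
  have -> : (\sum_(1 <= l < m.+1) j l * minn m.+1 (m - l) = X)%N.
    by apply: eq_bigr => l _; congr (_ * _)%N; apply/minn_idPr; lia.
  rewrite /a /b hS2 in h2 hsize *.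
  case hb: (t + S1 - m * n)%N => [|b'] /=; have -> : minn m.+1 m = m by apply/minn_idPr.
  + rewrite addn0; nia.
  + have -> : minn m.+1 (m.+1 + e) = m.+1 by apply/minn_idPl; lia.
    rewrite minnn; nia.
- rewrite (sum_nth (fun x => x) hsize) sum_s -/X.
  rewrite /a /b hS2 in h2 hsize *.
  case hb: (t + S1 - m * n)%N => [|b'] /=.
  + have -> : (m * n < t + S1)%N = false by lia.
    rewrite !addn0; nia.
  + have -> : (m * n < t + S1)%N = true by lia.
    nia.
Qed.

Lemma minz (a b : nat) : Num.min (a%:Z) (b%:Z) = (minn a b)%:Z.
Proof.
case: (leqP a b) => h.
- by rewrite (min_idPl _) ?lez_nat // (minn_idPl h).
- have h' := ltnW h.
  by rewrite (min_idPr _) ?lez_nat // (minn_idPr h').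
Qed.

Lemma sumz n (F : 'I_n -> nat) : \sum_i (F i)%:Z = (\sum_i F i)%N%:Z.
Proof. by rewrite (big_morph Posz PoszD (erefl (Posz 0))). Qed.

Lemma jl_eq (place : choiceType) n (P : 'I_n -> place) m (D : divisor place)
  (w : 'I_n -> nat) (hw : forall i, D (P i) = (w i)%:Z) l : (l <= m)%N ->
  jl P m D l = #|[set i | w i == (m - l)%N]|.
Proof.
move=> hl; rewrite /jl; apply: eq_card => i; rewrite !inE /vP hw subzn //.
Qed.

Lemma build (place : choiceType) n (P : 'I_n -> place) (P_inj : injective P)
  (w : 'I_n -> nat) (E : divisor place) :
  positive_div E -> (forall i, P i \notin finsupp E) ->
  exists D : divisor place,
    [/\ positive_div D, forall i, D (P i) = (w i)%:Z & offP P D = E].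
Proof.
move=> Epos EP.
pose F p := if [pick i | P i == p] is Some i then (w i)%:Z else E p.
exists [fsfun p in ([fset P i | i : 'I_n] `|` finsupp E)%fset => F p | 0]; split.
- move=> p; rewrite /vP fsfun_fun; case: ifP => // _; rewrite /F.
  case: pickP => [i _ //|_]; exact: Epos.
- move=> i; rewrite fsfun_fun.
  have -> : P i \in ([fset P i | i : 'I_n] `|` finsupp E)%fset.
    by rewrite in_fsetU; apply/orP; left; apply/imfsetP; exists i.
  rewrite /F; case: pickP => [k /eqP /P_inj -> //|/(_ i)]; by rewrite eqxx.
- apply/fsfunP => p; rewrite offPE; case: (boolP (p \in codom P)) => [/codomP [i ->]|hp].
  + by apply/esym/fsfun_dflt.
  + rewrite fsfun_fun; case: ifP => [_|]; rewrite /F.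
    * case: pickP => [k /eqP hk|//]; by rewrite -hk codom_f in hp.
    * rewrite in_fsetU => /norP [_ h]; by rewrite fsfun_dflt.
Qed.

Definition zdiv (place : choiceType) : divisor place := [fsfun].

Lemma zdivP (place : choiceType) (pdeg : place -> nat) n (P : 'I_n -> place) :
  [/\ positive_div (zdiv place), ddeg pdeg (zdiv place) = 0 &
      forall i, P i \notin finsupp (zdiv place)].
Proof.
have z0 : forall p, zdiv place p = 0 by move=> p; rewrite /zdiv fsfun0E.
split.
- by move=> p; rewrite /vP z0.
- rewrite (@ddeg_seq _ _ _ [::]) ?big_nil // => p; by rewrite mem_finsupp z0 eqxx.
- by move=> i; rewrite mem_finsupp z0 eqxx.
Qed.

Theorem lemma3p3 (place : choiceType) (pdeg : place -> nat)
  (pdeg_pos : forall p, (0 < pdeg p)%N)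
  (n : nat) (P : 'I_n -> place) (P_inj : injective P)
  (P_rat : forall i, pdeg (P i) = 1%N)
  (m : nat) (m_ge1 : (1 <= m)%N)
  (r t : int) (j : nat -> nat) (t_ge0 : 0 <= t) (t_le_r : t <= r) :
  (exists D : divisor place, Uset pdeg P m r t j D) <->
  ((m * n)%:Z - (\sum_(1 <= l < m.+1) l * j l)%N%:Z <= t
     <= (m.+1 * n)%:Z - (\sum_(1 <= l < m.+1) l.+1 * j l)%N%:Z
   /\ ((m * n)%:Z = t + (\sum_(1 <= l < m.+1) l * j l)%N%:Z -> t < r ->
       exists E : divisor place,
         [/\ positive_div E, ddeg pdeg E = r - t &
             forall i : 'I_n, P i \notin finsupp E])).
Proof.
have [tn ht] : exists tn : nat, t = tn%:Z by exists `|t|%N; rewrite gez0_abs.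
have [rn hr] : exists rn : nat, r = rn%:Z.
  by exists `|r|%N; rewrite gez0_abs // (le_trans t_ge0 t_le_r).
subst t r.
set S1 := (\sum_(1 <= l < m.+1) l * j l)%N.
set S2 := (\sum_(1 <= l < m.+1) l.+1 * j l)%N.
split.
- move=> [D [Dpos Ddeg Dbdeg Dj]].
  pose w i := `|D (P i)|%N.
  have hw : forall i, D (P i) = (w i)%:Z by move=> i; rewrite /w gez0_abs //; apply: Dpos.
  have htn : tn = (\sum_i minn m.+1 (w i))%N.
    apply/eqP; rewrite -eqz_nat -Dbdeg Dbar_deg // -sumz.
    apply/eqP; apply: eq_bigr => i _; by rewrite hw minz.
  have hj : forall l, (1 <= l <= m)%N -> j l = #|[set i | w i == (m - l)%N]|.
    move=> l /andP [l1 lm]; by rewrite -Dj ?l1 ?lm // (jl_eq hw).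
  have hS1 : S1 = (\sum_i (if (w i < m)%N then m - w i else 0))%N.
    rewrite -(sum_j m w id) /S1; apply: eq_big_nat => l hl; by rewrite hj.
  have hS2 : S2 = (\sum_i (if (w i < m)%N then (m - w i).+1 else 0))%N.
    rewrite -(sum_j m w succn) /S2; apply: eq_big_nat => l hl; by rewrite hj.
  have hmn : (m * n = \sum_(i < n) m)%N by rewrite sum_nat_const card_ord mulnC.
  have hm1n : (m.+1 * n = \sum_(i < n) m.+1)%N by rewrite sum_nat_const card_ord mulnC.
  have f1 : (m * n <= tn + S1)%N.
    rewrite hmn htn hS1 -big_split; apply: leq_sum => i _; case: ltnP => /= h; lia.
  have f2 : (tn + S2 <= m.+1 * n)%N.
    rewrite hm1n htn hS2 -big_split; apply: leq_sum => i _; case: ltnP => /= h; lia.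
  split; first by apply/andP; split; lia.
  move=> heq hlt.
  have heq' : (m * n = tn + S1)%N by lia.
  have wle : forall i, (w i <= m)%N.
    have hF : forall i : 'I_n, (m <= minn m.+1 (w i) + (if (w i < m)%N then m - w i else 0))%N.
      move=> i; case: ltnP => /= h; lia.
    have := @sumnB _ (index_enum 'I_n) xpredT _ _ (fun i _ => hF i).
    rewrite -hmn big_split /= -htn -hS1 -heq' subnn => /eqP.
    rewrite sum_nat_eq0 => /forallP hall i.
    have := hall i; rewrite /= subn_eq0; case: ltnP => /= h; lia.
  have hsw : tn = (\sum_i w i)%N.
    rewrite htn; apply: eq_bigr => i _; apply/minn_idPr; exact: leqW.
  exists (offP P D); split.
  + by move=> p; rewrite /vP offPE; case: ifP => // _; apply: Dpos.
  + have := ddeg_split P_inj P_rat D.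
    rewrite Ddeg (eq_bigr (fun i => (w i)%:Z)) // sumz -hsw => ->.
    by rewrite addrK.
  + by move=> i; rewrite mem_finsupp offPE codom_f eqxx.
- move=> [/andP [i1 i2] ii].
  have h1 : (m * n <= tn + S1)%N by lia.
  have h2 : (tn + S2 <= m.+1 * n)%N by lia.
  suff : exists (w : 'I_n -> nat) (E : divisor place),
     [/\ positive_div E, forall i, P i \notin finsupp E &
      [/\ forall l, (1 <= l <= m)%N -> #|[set i | w i == (m - l)%N]| = j l,
        (\sum_i minn m.+1 (w i))%N = tn &
        ddeg pdeg E + (\sum_i w i)%N%:Z = rn%:Z]].
    move=> [w [E [Epos EP [hw1 hw2 hw3]]]].
    have [D [Dpos hD hoff]] := build P_inj w Epos EP.
    exists D; split => //.
    * by rewrite (ddeg_split P_inj P_rat) hoff (eq_bigr (fun i => (w i)%:Z)) // sumz.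
    * rewrite Dbar_deg // (eq_bigr (fun i => (minn m.+1 (w i))%:Z)) ?sumz ?hw2 //.
      by move=> i _; rewrite hD minz.
    * move=> l /andP [l1 lm]; by rewrite (jl_eq hD) // hw1 ?l1.
  case: (ltnP (m * n) (tn + S1)) => hb.
  + have [w [hw1 hw2 hw3]] := @exist_w n m j tn (rn - tn) m_ge1 h1 h2.
    have [Z1 Z2 Z3] := @zdivP _ pdeg _ P.
    exists w, (zdiv place); split => //; split => //.
    rewrite Z2 add0r hw3 -/S1 hb; congr Posz; lia.
  + have hb' : (m * n)%:Z = tn%:Z + S1%:Z by apply/eqP; rewrite -PoszD eqz_nat eqn_leq hb h1.
    have [w [hw1 hw2 hw3]] := @exist_w n m j tn 0 m_ge1 h1 h2.
    rewrite -/S1 (_ : (m * n < tn + S1)%N = false) ?addn0 in hw3; last by lia.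
    case: (ltnP tn rn) => hr.
    * have [E [Epos Edeg EP]] := ii hb' hr.
      exists w, E; split => //; split => //.
      by rewrite Edeg hw3 subrK.
    * have [Z1 Z2 Z3] := @zdivP _ pdeg _ P.
      exists w, (zdiv place); split => //; split => //.
      rewrite Z2 add0r hw3; congr Posz; lia.
Qed.
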